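(* Let $A$ be a finite totally ordered alphabet, $w\in A^{n}$ ($n\ge1$), $\pi=\pi(w)$ its standard permutation, $l$ the lcm of the cycle lengths of $\pi$, and $T(w)$ the table of $w$. For $i\in[n]$ let $r=r(i)$ be the length of the cycle of $\pi$ containing $i$, let $u=u(i)$ be the $i$-th row of $T(w)$ and let $x$ be the prefix of $u$ of length $r$. Then: (i) $x$ is the root of $u$ (so $x$ is primitive and $u=x^{l/r}$); (ii) every conjugate $y$ of $x$ occurs as the root of some row of $T(w)$, and the number of rows with root $y$ equals the number of rows with root $x$; (iii) the rows of $T(w)$ are in lexicographic (nondecreasing) order from top to bottom; (iv) the final column of $T(w)$, read from top to bottom, is $w$.
   Context: $[n]=\{0<1<\cdots<n-1\}$. Standard permutation: let $f(w)$ be the letters of $w$ sorted in nondecreasing order; for each letter $a$ occurring in $w$, $\pi_{a}$ is the unique order-preserving injective partial map on $[n]$ whose domain is the set of positions (indexed from $0$) of $a$ in $f(w)$ and whose range is the set of positions of $a$ in $w$; $\pi(w)=\bigcup_{a}\pi_{a}$, a permutation of $[n]$. Maps are composed left to right and $i\cdot\phi$ denotes the image of $i$. For $u=b_{1}\cdots b_{m}$ put $\pi_{u}=\pi_{b_{1}}\cdots\pi_{b_{m}}$; for each $i$ and $m$ there is a unique $u\in A^{m}$ with $i\cdot\pi_{u}$ defined. The table $T(w)$ is the $n\times l$ array whose $i$-th row ($i\in[n]$) is the unique $u\in A^{l}$ such that $i\cdot\pi_{u}$ is defined. The root of a word $u$ is the shortest $x$ with $u=x^{t}$, $t\ge1$;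 a word is primitive if not a proper power; $xy$ and $yx$ are conjugates. *)

(* Defs.v *)
From HB Require Import structures.
From mathcomp Require Import all_boot all_order.
From mathcomp Require Import boolp.
Unset Printing Implicit Defensive.
Import Order.TTheory.
Local Open Scope order_scope.

Section Table.
Context {d : Order.disp_t} {A : finOrderType d}.

Definition positions (a : A) (s : seq A) : seq nat :=
  [seq p.2 | p <- zip s (iota 0 (size s)) & p.1 == a].

Definition fsort (w : seq A) : seq A := sort <=%O w.

(* pi_a : the unique order-preserving injective partial map from the positions
   of a in f(w) onto the positions of a in w (None = undefined) *)
Definition pi_letter (w : seq A) (a : A) (j : nat) : option nat :=
  let dom := positions a (fsort w) in
  let rg := positions a w in
  if j \in dom then Some (nth 0 rg (index j dom)) else None.

(* pi(w) = union of the pi_a (their domains are disjoint) *)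
Definition stdperm_nat (w : seq A) (j : nat) : option nat :=
  if [pick a | pi_letter w a j != None] is Some a then pi_letter w a j else None.

Definition stdperm (w : seq A) (j : 'I_(size w)) : 'I_(size w) :=
  insubd j (odflt 0 (stdperm_nat w j)).

Definition cyclen (w : seq A) (i : 'I_(size w)) : nat := order (stdperm w) i.

Definition lcm_cycles (w : seq A) : nat :=
  \big[lcmn/1]_(i < size w) cyclen w i.

(* i . pi_u, composing left to right *)
Definition pi_word (w : seq A) (u : seq A) (i : nat) : option nat :=
  foldl (fun acc b => obind (pi_letter w b) acc) (Some i) u.

(* i-th row of the table T(w): the unique u in A^l with i . pi_u defined *)
Definition table_row (w : seq A) (i : nat) : seq A :=
  if [pick u : (lcm_cycles w).-tuple A | pi_word w u i != None] is Some u
  then val u else [::].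

Definition wpow (x : seq A) (t : nat) : seq A := flatten (nseq t x).

Definition is_root (x u : seq A) : Prop :=
  (exists2 t, 0 < t & u = wpow x t) /\
  (forall y t, 0 < t -> u = wpow y t -> size x <= size y).

Definition primitive (x : seq A) : Prop :=
  forall y t, x = wpow y t -> t = 1.

Definition conjugate (x y : seq A) : Prop :=
  exists s t, x = s ++ t /\ y = t ++ s.

Fixpoint lexle (s t : seq A) : bool :=
  match s, t with
  | [::], _ => true
  | _ :: _, [::] => false
  | a :: s', b :: t' => (a < b) || ((a == b) && lexle s' t')
  end.

End Table.

(* Main.v *)
Require Import Defs.
From HB Require Import structures.
From mathcomp Require Import all_boot all_order.
From mathcomp Require Import boolp.
Import Order.TTheory.


Lemma positions_gen {d} {A : finOrderType d} (x0 : A) a (s : seq A) m :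
  [seq p.2 | p <- zip s (iota m (size s)) & p.1 == a] =
  [seq j <- iota m (size s) | nth x0 s (j - m) == a].
Proof.
elim: s m => [|x s IH] m //=.
rewrite subnn /=; case: (x == a) => /=; rewrite IH; congr (_ :: _) || idtac;
  apply: eq_in_filter => j; rewrite mem_iota => /andP[Hj _];
  by rewrite (_ : j - m = (j - m.+1).+1) // subnSK.
Qed.

Lemma positionsE {d} {A : finOrderType d} (x0 : A) a (s : seq A) :
  positions a s = [seq j <- iota 0 (size s) | nth x0 s j == a].
Proof.
rewrite /positions (positions_gen x0).
by apply: eq_filter => j; rewrite subn0.
Qed.


Lemma mem_positions {d} {A : finOrderType d} (x0 : A) a (s : seq A) j :
  (j \in positions a s) = (j < size s) && (nth x0 s j == a).
Proof. by rewrite (positionsE x0) mem_filter mem_iota /= andbC. Qed.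

Lemma sorted_positions {d} {A : finOrderType d} a (s : seq A) :
  sorted ltn (positions a s).
Proof.
case: s => [|x s]; first by [].
by rewrite (positionsE x) sorted_filter //; [exact: ltn_trans | exact: iota_ltn_sorted].
Qed.

Lemma size_positions {d} {A : finOrderType d} a (s : seq A) :
  size (positions a s) = count_mem a s.
Proof.
case: s => [|x s]; first by [].
rewrite (positionsE x) size_filter -{3}(mkseq_nth x (x :: s)) /mkseq count_map.
by apply: eq_count => j /=; rewrite eq_sym.
Qed.

Lemma uniq_positions {d} {A : finOrderType d} a (s : seq A) :
  uniq (positions a s).
Proof. exact: (sorted_uniq ltn_trans ltnn (sorted_positions a s)). Qed.

Lemma size_fsort {d} {A : finOrderType d} (w : seq A) : size (fsort w) = size w.
Proof. by rewrite /fsort size_sort. Qed.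

Lemma pi_letterE {d} {A : finOrderType d} (x0 : A) (w : seq A) a j :
  pi_letter w a j =
  if (j < size w) && (nth x0 (fsort w) j == a)
  then Some (nth 0 (positions a w) (index j (positions a (fsort w)))) else None.
Proof. by rewrite /pi_letter (mem_positions x0) size_fsort. Qed.

Lemma pi_letter_val {d} {A : finOrderType d} (x0 : A) (w : seq A) j :
  j < size w ->
  let a := nth x0 (fsort w) j in
  let v := nth 0 (positions a w) (index j (positions a (fsort w))) in
  v < size w /\ nth x0 w v = a.
Proof.
move=> Hj a v.
have Hm : j \in positions a (fsort w) by rewrite (mem_positions x0) size_fsort Hj /=.
have Hk : index j (positions a (fsort w)) < size (positions a w).
  rewrite size_positions -(count_sort <=%O) -size_positions index_mem; exact: Hm.
have := mem_nth 0 Hk; rewrite -/v (mem_positions x0) => /andP[H1 /eqP H2].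
by split.
Qed.


Lemma stdperm_natE {d} {A : finOrderType d} (x0 : A) (w : seq A) j :
  j < size w -> stdperm_nat w j = pi_letter w (nth x0 (fsort w) j) j.
Proof.
move=> Hj; rewrite /stdperm_nat; case: pickP => [a Ha | H].
  move: Ha; rewrite (pi_letterE x0) Hj /=.
  case: (nth x0 (fsort w) j =P a) => [E|] //= _.
  by rewrite -E (pi_letterE x0) Hj eqxx.
by move: (H (nth x0 (fsort w) j)); rewrite (pi_letterE x0) Hj eqxx.
Qed.

Lemma stdpermE {d} {A : finOrderType d} (x0 : A) (w : seq A) (j : 'I_(size w)) :
  let a := nth x0 (fsort w) j in
  val (stdperm w j) = nth 0 (positions a w) (index (j : nat) (positions a (fsort w))).
Proof.
move=> a; have [H1 _] := pi_letter_val x0 w j (ltn_ord j).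
rewrite /stdperm (stdperm_natE x0) // (pi_letterE x0) ltn_ord eqxx /=.
by rewrite insubdK.
Qed.

Lemma pi_letter_sigma {d} {A : finOrderType d} (x0 : A) (w : seq A) (j : 'I_(size w)) a :
  pi_letter w a j = if nth x0 (fsort w) j == a then Some (val (stdperm w j)) else None.
Proof.
rewrite (pi_letterE x0) ltn_ord /=; case: eqP => // <-.
by rewrite (stdpermE x0).
Qed.

Lemma stdperm_w {d} {A : finOrderType d} (x0 : A) (w : seq A) (j : 'I_(size w)) :
  nth x0 w (stdperm w j) = nth x0 (fsort w) j.
Proof.
have [_ H2] := pi_letter_val x0 w j (ltn_ord j).
by rewrite (stdpermE x0).
Qed.

Lemma index_lt {d} {A : finOrderType d} (x0 : A) (w : seq A) (j : 'I_(size w)) :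
  let a := nth x0 (fsort w) j in
  [/\ (j : nat) \in positions a (fsort w),
      index (j : nat) (positions a (fsort w)) < size (positions a (fsort w)) &
      size (positions a (fsort w)) = size (positions a w)].
Proof.
move=> a.
have Hm : (j : nat) \in positions a (fsort w) by rewrite (mem_positions x0) size_fsort ltn_ord /=.
split => //; first by rewrite index_mem.
by rewrite !size_positions count_sort.
Qed.

Lemma stdperm_inj {d} {A : finOrderType d} (w : seq A) : injective (stdperm w).
Proof.
move=> j k E.
have x0 : A by case: w j {k E} => [[]//|x _] _; exact: x.
have Ea : nth x0 (fsort w) j = nth x0 (fsort w) k by rewrite -!(stdperm_w x0) E.
have := congr1 val E; rewrite !(stdpermE x0) -Ea.
have [Hj Ij S] := index_lt x0 w j; have [Hk Ik _] := index_lt x0 w k.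
rewrite -Ea in Hk Ik.
move/eqP; rewrite nth_uniq ?uniq_positions -?S // => /eqP EI.
apply: val_inj.
by rewrite /= -(nth_index 0 Hj) EI nth_index.
Qed.

Lemma stdperm_mono {d} {A : finOrderType d} (x0 : A) (w : seq A) (j k : 'I_(size w)) :
  j < k -> nth x0 (fsort w) j = nth x0 (fsort w) k -> stdperm w j < stdperm w k.
Proof.
move=> Hjk Ea.
rewrite !(stdpermE x0) -Ea.
have [Hj Ij S] := index_lt x0 w j; have [Hk Ik _] := index_lt x0 w k.
rewrite -Ea in Hk Ik.
set dom := positions _ (fsort w) in Hj Ij S Hk Ik *.
have Hlt : index (j : nat) dom < index (k : nat) dom.
  rewrite ltnNge; apply/negP => Hle.
  have := sorted_leq_nth leq_trans leqnn 0 (sub_sorted (@ltnW) (sorted_positions _ _)) _ _ Ik Ij Hle.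
  by rewrite !nth_index // leqNgt Hjk.
apply: (sorted_ltn_nth ltn_trans 0 (sorted_positions _ _)) => //; rewrite inE -S //.
Qed.


Definition F {d} {A : finOrderType d} (x0 : A) (w : seq A) (i : 'I_(size w)) k :=
  nth x0 (fsort w) (iter k (stdperm w) i).

Lemma FS {d} {A : finOrderType d} (x0 : A) (w : seq A) i k :
  F x0 w (stdperm w i) k = F x0 w i k.+1.
Proof. by rewrite /F iterSr. Qed.

Lemma mkseq_cons {T} (f : nat -> T) m : mkseq f m.+1 = f 0 :: mkseq (fun k => f k.+1) m.
Proof. by rewrite /mkseq /= -add1n iotaDl -map_comp. Qed.

Lemma foldl_None {d} {A : finOrderType d} (w : seq A) u :
  foldl (fun acc b => obind (pi_letter w b) acc) None u = None.
Proof. by elim: u. Qed.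

Lemma pi_word_cons {d} {A : finOrderType d} (w : seq A) b u i :
  pi_word w (b :: u) i = if pi_letter w b i is Some k then pi_word w u k else None.
Proof. by rewrite /pi_word /=; case: pi_letter => //=; rewrite foldl_None. Qed.

Lemma pi_word_row {d} {A : finOrderType d} (x0 : A) (w : seq A) u (i : 'I_(size w)) :
  pi_word w u i != None -> u = mkseq (F x0 w i) (size u).
Proof.
elim: u i => [|b u IH] i //=.
rewrite pi_word_cons (pi_letter_sigma x0).
case: (nth x0 (fsort w) i =P b) => // Eb H.
rewrite mkseq_cons (IH _ H) size_mkseq /F /= Eb; congr (_ :: _).
by apply: eq_mkseq => k; rewrite -iterSr.
Qed.

Lemma pi_word_mkseq {d} {A : finOrderType d} (x0 : A) (w : seq A) m (i : 'I_(size w)) :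
  pi_word w (mkseq (F x0 w i) m) i != None.
Proof.
elim: m i => [|m IH] i //.
rewrite mkseq_cons pi_word_cons (pi_letter_sigma x0) /F /= eqxx.
rewrite (eq_mkseq (g := F x0 w (stdperm w i))); first exact: IH.
by move=> k; rewrite FS.
Qed.

Lemma table_rowE {d} {A : finOrderType d} (x0 : A) (w : seq A) (i : 'I_(size w)) :
  table_row w i = mkseq (F x0 w i) (lcm_cycles w).
Proof.
rewrite /table_row; case: pickP => [u Hu | H].
  by have := pi_word_row x0 w _ i Hu; rewrite size_tuple.
have Hs : size (mkseq (F x0 w i) (lcm_cycles w)) == lcm_cycles w by rewrite size_mkseq.
by move: (H (Tuple Hs)); rewrite /= pi_word_mkseq.
Qed.


Lemma iter_mult {T} (f : T -> T) m j q : iter m f j = j -> iter (q * m) f j = j.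
Proof. by move=> H; elim: q => [|q IH] //; rewrite mulSn iterD IH H. Qed.

Lemma iter_modm {T} (f : T -> T) m j k : iter m f j = j -> iter k f j = iter (k %% m) f j.
Proof. by move=> H; rewrite {1}(divn_eq k m) addnC iterD iter_mult. Qed.

Lemma cyc_iter {d} {A : finOrderType d} (w : seq A) (i : 'I_(size w)) :
  iter (cyclen w i) (stdperm w) i = i.
Proof. exact: (iter_order (@stdperm_inj _ _ w)). Qed.

Lemma cyc_gt0 {d} {A : finOrderType d} (w : seq A) (i : 'I_(size w)) : 0 < cyclen w i.
Proof. exact: order_gt0. Qed.

Lemma cyc_dvd {d} {A : finOrderType d} (w : seq A) (i : 'I_(size w)) :
  cyclen w i %| lcm_cycles w.
Proof. by apply: (biglcmn_sup i). Qed.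

Lemma lcm_gt0 {d} {A : finOrderType d} (w : seq A) : 0 < lcm_cycles w.
Proof.
rewrite /lcm_cycles; elim/big_ind: _ => // [m p Hm Hp|i _]; first by rewrite lcmn_gt0 Hm.
exact: cyc_gt0.
Qed.

Lemma iter_lcm {d} {A : finOrderType d} (w : seq A) (i : 'I_(size w)) :
  iter (lcm_cycles w) (stdperm w) i = i.
Proof. by rewrite -(divnK (cyc_dvd w i)) iter_mult // cyc_iter. Qed.

Lemma cyc_iterE {d} {A : finOrderType d} (w : seq A) (i : 'I_(size w)) k :
  cyclen w (iter k (stdperm w) i) = cyclen w i.
Proof.
rewrite /cyclen /order; apply: eq_card => z.
by rewrite !inE (same_connect (fconnect_sym (@stdperm_inj _ _ w)) (fconnect_iter _ k i)).
Qed.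

Lemma cyc_dvd_iter {d} {A : finOrderType d} (w : seq A) (i : 'I_(size w)) m :
  iter m (stdperm w) i = i -> cyclen w i %| m.
Proof.
move=> H; rewrite /dvdn; apply/eqP.
have Hr := cyc_gt0 w i.
have E : iter (m %% cyclen w i) (stdperm w) i = i.
  by rewrite -(iter_modm _ _ _ m (cyc_iter w i)).
have := findex_iter (f := stdperm w) (x := i) (ltn_pmod m Hr); rewrite E => <-.
exact: (findex_iter (f := stdperm w) (x := i) (i := 0) Hr).
Qed.


Lemma keyK {d} {A : finOrderType d} (x0 : A) (w : seq A) (a b : 'I_(size w)) m :
  b = iter m (stdperm w) a -> (forall k, F x0 w a k = F x0 w b k) -> a < b -> False.
Proof.
move=> Eb HF Hab.
have Hlt : forall k, iter k (stdperm w) a < iter k (stdperm w) b.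
  elim=> [|k IH] //; rewrite !iterS; apply: (stdperm_mono x0) => //; exact: HF.
have Hr := cyc_gt0 w a.
case: (@arg_maxnP _ (Ordinal Hr) predT (fun p : 'I_(cyclen w a) => val (iter p (stdperm w) a)) isT)
  => p _ Hmax.
have := Hlt p; rewrite Eb -iterD (iter_modm _ _ _ (p + m) (cyc_iter w a)).
have := Hmax (Ordinal (ltn_pmod (p + m) Hr)) isT => /= H1 H2.
by move: (leq_trans H2 H1); rewrite ltnn.
Qed.

Lemma key {d} {A : finOrderType d} (x0 : A) (w : seq A) (a : 'I_(size w)) m :
  (forall k, F x0 w a k = F x0 w (iter m (stdperm w) a) k) -> iter m (stdperm w) a = a.
Proof.
move=> HF; set b := iter m (stdperm w) a.
case: (ltngtP a b) => H.
- by case: (keyK x0 w a b m (erefl b) HF H).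
- have Hr := cyc_gt0 w a.
  have Ea : a = iter (cyclen w a - m %% cyclen w a) (stdperm w) b.
    rewrite /b -iterD (iter_modm _ _ _ (cyclen w a - m %% cyclen w a + m) (cyc_iter w a)).
    rewrite {2}(divn_eq m (cyclen w a)) addnCA subnK ?(ltnW (ltn_pmod _ Hr)) //.
    by rewrite modnMDl modnn.
  by case: (keyK x0 w b a _ Ea (fun k => esym (HF k)) H).
- by apply: val_inj.
Qed.


Lemma wpowS {d} {A : finOrderType d} (x : seq A) t : wpow x t.+1 = x ++ wpow x t.
Proof. by []. Qed.

Lemma wpowD {d} {A : finOrderType d} (x : seq A) a b : wpow x (a + b) = wpow x a ++ wpow x b.
Proof. by elim: a => [|a IH] //=; rewrite addSn !wpowS IH catA. Qed.

Lemma size_wpow {d} {A : finOrderType d} (x : seq A) t : size (wpow x t) = t * size x.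
Proof. by elim: t => [|t IH] //; rewrite wpowS size_cat IH mulSn. Qed.

Lemma wpow_mul {d} {A : finOrderType d} (y : seq A) t q : wpow (wpow y t) q = wpow y (t * q).
Proof. by elim: q => [|q IH]; rewrite ?muln0 // wpowS IH mulnS wpowD. Qed.

Lemma wpow_rcons {d} {A : finOrderType d} (x : seq A) t : wpow x t.+1 = wpow x t ++ x.
Proof. by rewrite -addn1 wpowD /= /wpow /= cats0. Qed.

Lemma rot_wpow {d} {A : finOrderType d} (y : seq A) t : rot (size y) (wpow y t) = wpow y t.
Proof.
case: t => [|t]; first by rewrite /wpow /= /rot; case: (size y).
by rewrite wpowS rot_size_cat -wpow_rcons.
Qed.

Lemma take_wpow {d} {A : finOrderType d} (x : seq A) t : 0 < t -> take (size x) (wpow x t) = x.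
Proof. by case: t => // t _; rewrite wpowS take_size_cat. Qed.

Lemma mkseqD {T} (g : nat -> T) a b :
  mkseq g (a + b) = mkseq g a ++ mkseq (fun k => g (a + k)) b.
Proof.
rewrite /mkseq iotaD map_cat add0n.
have -> : iota a b = map (addn a) (iota 0 b) by rewrite -iotaDl addn0.
by rewrite -map_comp.
Qed.

Lemma wpow_mkseq {d} {A : finOrderType d} (g : nat -> A) r t :
  (forall k, g (k + r) = g k) -> wpow (mkseq g r) t = mkseq g (t * r).
Proof.
move=> Hg; elim: t => [|t IH] //.
rewrite wpowS IH mulSn mkseqD; congr (_ ++ _).
by apply: eq_mkseq => k; rewrite addnC Hg.
Qed.

Lemma take_mkseq {T} (g : nat -> T) s l : s <= l -> take s (mkseq g l) = mkseq g s.
Proof. by move=> H; rewrite /mkseq -map_take take_iota (minn_idPl H). Qed.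

Lemma rot_mkseq {T} (g : nat -> T) s l : s <= l -> (forall k, g (k + l) = g k) ->
  rot s (mkseq g l) = mkseq (fun k => g (k + s)) l.
Proof.
move=> Hs Hg; rewrite /rot take_mkseq //.
rewrite -{2}(subnK Hs) mkseqD; congr (_ ++ _).
  rewrite /mkseq -map_drop drop_iota add0n.
  have -> : iota s (l - s) = map (addn s) (iota 0 (l - s)) by rewrite -iotaDl addn0.
  rewrite -map_comp.
  by apply: eq_map => k /=; rewrite addnC.
apply: eq_mkseq => k; rewrite -addnA (addnC k) addnA subnK //.
by rewrite addnC Hg.
Qed.


Lemma F_per_r {d} {A : finOrderType d} (x0 : A) (w : seq A) j k :
  F x0 w j (k + cyclen w j) = F x0 w j k.
Proof. by rewrite /F iterD cyc_iter. Qed.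

Lemma F_per_l {d} {A : finOrderType d} (x0 : A) (w : seq A) j k :
  F x0 w j (k + lcm_cycles w) = F x0 w j k.
Proof. by rewrite /F iterD iter_lcm. Qed.

Lemma F_iter {d} {A : finOrderType d} (x0 : A) (w : seq A) j s k :
  F x0 w (iter s (stdperm w) j) k = F x0 w j (k + s).
Proof. by rewrite /F iterD. Qed.

Lemma F_modl {d} {A : finOrderType d} (x0 : A) (w : seq A) j k :
  F x0 w j k = F x0 w j (k %% lcm_cycles w).
Proof. by rewrite /F (iter_modm _ _ _ k (iter_lcm w j)). Qed.

Lemma r_le_l {d} {A : finOrderType d} (w : seq A) j : cyclen w j <= lcm_cycles w.
Proof. exact: dvdn_leq (lcm_gt0 w) (cyc_dvd w j). Qed.

Lemma xE {d} {A : finOrderType d} (x0 : A) (w : seq A) (j : 'I_(size w)) :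
  take (cyclen w j) (table_row w j) = mkseq (F x0 w j) (cyclen w j).
Proof. by rewrite (table_rowE x0) take_mkseq // r_le_l. Qed.

Lemma row_pow {d} {A : finOrderType d} (x0 : A) (w : seq A) (j : 'I_(size w)) :
  table_row w j = wpow (take (cyclen w j) (table_row w j)) (lcm_cycles w %/ cyclen w j).
Proof.
rewrite (xE x0) wpow_mkseq; last exact: F_per_r.
by rewrite divnK ?cyc_dvd // (table_rowE x0).
Qed.

Lemma root_min {d} {A : finOrderType d} (x0 : A) (w : seq A) (j : 'I_(size w)) y t :
  0 < t -> table_row w j = wpow y t -> cyclen w j <= size y.
Proof.
move=> Ht Hu.
have Hl : lcm_cycles w = t * size y by rewrite -size_wpow -Hu (table_rowE x0) size_mkseq.
have Hs : 0 < size y.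
  by case: (size y) Hl => [|//]; rewrite muln0 => E; move: (lcm_gt0 w); rewrite E.
have Hsl : size y <= lcm_cycles w by rewrite Hl leq_pmull.
have Hrot := rot_wpow y t; rewrite -Hu (table_rowE x0) rot_mkseq // in Hrot;
  last exact: F_per_l.
have HF : forall k, F x0 w j k = F x0 w (iter (size y) (stdperm w) j) k.
  move=> k; rewrite F_iter F_modl [in RHS]F_modl.
  have Hk : k %% lcm_cycles w < lcm_cycles w by rewrite ltn_pmod // lcm_gt0.
  have := congr1 (nth x0 ^~ (k %% lcm_cycles w)) Hrot.
  rewrite !nth_mkseq // => <-.
  by rewrite [in LHS]F_modl modnDml.
have := key x0 w j _ HF => /cyc_dvd_iter H.
exact: dvdn_leq Hs H.
Qed.

Lemma root_row {d} {A : finOrderType d} (x0 : A) (w : seq A) (j : 'I_(size w)) :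
  is_root (take (cyclen w j) (table_row w j)) (table_row w j).
Proof.
split.
  exists (lcm_cycles w %/ cyclen w j); last exact: (row_pow x0).
  by rewrite ltEnat /= divn_gt0 ?cyc_gt0 // r_le_l.
move=> y t Ht Hu; rewrite (xE x0) size_mkseq.
exact: (root_min x0 w j y t Ht Hu).
Qed.

Lemma prim_row {d} {A : finOrderType d} (x0 : A) (w : seq A) (j : 'I_(size w)) :
  primitive (take (cyclen w j) (table_row w j)).
Proof.
move=> y t Hx.
have Hsz : size (take (cyclen w j) (table_row w j)) = cyclen w j by rewrite (xE x0) size_mkseq.
case: t Hx => [|t] Hx.
  by move: Hsz; rewrite Hx /= => E; move: (cyc_gt0 w j); rewrite -E.
have Hu := row_pow x0 w j; rewrite Hx wpow_mul in Hu.
have Hpos : 0 < t.+1 * (lcm_cycles w %/ cyclen w j).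
  by rewrite muln_gt0 /= divn_gt0 ?cyc_gt0 // r_le_l.
have Hy : 0 < size y.
  move: Hsz; rewrite Hx size_wpow; case: (size y) => //; rewrite muln0 => E.
  by move: (cyc_gt0 w j); rewrite -E.
have := root_min x0 w j _ _ Hpos Hu.
rewrite -Hsz Hx size_wpow.
case: t {Hx Hu Hpos} => // t.
rewrite mulSn -[X in _ <= X]addn0 leq_add2l leqn0 muln_eq0 /= => /eqP E.
by rewrite E in Hy.
Qed.

Lemma root_uniq {d} {A : finOrderType d} (x x' u : seq A) :
  is_root x u -> is_root x' u -> x = x'.
Proof.
move=> [[t Ht Hu] Hm] [[t' Ht' Hu'] Hm'].
have E : size x = size x'.
  by apply/eqP; rewrite eqn_leq; apply/andP; split; [exact: (Hm _ _ Ht' Hu') | exact: (Hm' _ _ Ht Hu)].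
by rewrite -(take_wpow x t Ht) -Hu E Hu' take_wpow.
Qed.


Lemma shift_row {d} {A : finOrderType d} (x0 : A) (w : seq A) (j : 'I_(size w)) s :
  s <= cyclen w j ->
  let j' := iter s (stdperm w) j in
  take (cyclen w j') (table_row w j') = rot s (take (cyclen w j) (table_row w j)).
Proof.
move=> Hs j'; rewrite !(xE x0) rot_mkseq //; last exact: F_per_r.
rewrite /j' cyc_iterE; apply: eq_mkseq => k; exact: F_iter.
Qed.

Lemma conj_step {d} {A : finOrderType d} (x0 : A) (w : seq A) (j : 'I_(size w)) p q :
  is_root (p ++ q) (table_row w j) ->
  is_root (q ++ p) (table_row w (iter (size p) (stdperm w) j)).
Proof.
move=> H.
have Ex := root_uniq _ _ _ H (root_row x0 w j).
have Hs : size p <= cyclen w j.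
  by rewrite -[X in _ <= X](size_mkseq (F x0 w j)) -(xE x0) -Ex size_cat leq_addr.
have := root_row x0 w (iter (size p) (stdperm w) j).
by rewrite (shift_row x0 w j _ Hs) -Ex rot_size_cat.
Qed.

Lemma iter_inj {T} (f : T -> T) n : injective f -> injective (iter n f).
Proof. by move=> Hf; elim: n => [|n IH] //= a b /Hf /IH. Qed.

Lemma card_conj {d} {A : finOrderType d} (x0 : A) (w : seq A) p q :
  #|[set j : 'I_(size w) | `[< is_root (p ++ q) (table_row w j) >]]| <=
  #|[set j : 'I_(size w) | `[< is_root (q ++ p) (table_row w j) >]]|.
Proof.
rewrite -(card_imset _ (iter_inj _ (size p) (@stdperm_inj _ _ w))).
apply: subset_leq_card; apply/subsetP => z /imsetP [j Hj ->].
rewrite inE in Hj; rewrite inE; apply/asboolP.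
exact: (conj_step x0 w j p q (asboolW Hj)).
Qed.

Lemma fw_sorted {d} {A : finOrderType d} (x0 : A) (w : seq A) (i j : 'I_(size w)) :
  i <= j -> (nth x0 (fsort w) i <= nth x0 (fsort w) j)%O.
Proof.
move=> H.
apply: (sorted_leq_nth le_trans lexx x0 (sort_sorted le_total w)) => //;
  by rewrite inE size_sort.
Qed.

Lemma lex_mkseq {d} {A : finOrderType d} (x0 : A) (w : seq A) m :
  forall i j : 'I_(size w), i <= j -> lexle (mkseq (F x0 w i) m) (mkseq (F x0 w j) m).
Proof.
elim: m => [|m IH] i j Hij //.
rewrite !mkseq_cons /=.
rewrite (eq_mkseq (g := F x0 w (stdperm w i))); last by move=> k; rewrite FS.
rewrite (eq_mkseq (f := fun k => F x0 w j k.+1) (g := F x0 w (stdperm w j))); last by move=> k; rewrite FS.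
have := fw_sorted x0 w i j Hij; rewrite le_eqVlt /F /= => /orP [/eqP E | ->] //.
rewrite E eqxx ltxx /=; apply: IH.
case: (ltngtP i j) Hij => // [Hlt _ | /val_inj -> _] //.
by apply: ltnW; apply: (stdperm_mono x0).
Qed.

Lemma last_col {d} {A : finOrderType d} (x0 : A) (w : seq A) (i : 'I_(size w)) :
  drop (lcm_cycles w).-1 (table_row w i) = [:: nth x0 w i].
Proof.
rewrite (table_rowE x0) -(prednK (lcm_gt0 w)) mkseqS -cats1 drop_size_cat ?size_mkseq //.
rewrite /F -(stdperm_w x0) -iterS prednK ?lcm_gt0 //.
by rewrite iter_lcm.
Qed.


Theorem proposition1p2p9 (d : Order.disp_t) (A : finOrderType d) (w : seq A)
  (Hn : 0 < size w) :
  let n := size w in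
  let l := lcm_cycles w in
  [/\ (* (i) *)
      (forall i : 'I_n,
         let r := cyclen w i in
         let u := table_row w i in
         let x := take r u in
         [/\ is_root x u, primitive x & u = wpow x (l %/ r)]),
      (* (ii) *)
      (forall i : 'I_n,
         let x := take (cyclen w i) (table_row w i) in
         forall y, conjugate x y ->
           (exists j : 'I_n, is_root y (table_row w j)) /\
           #|[set j : 'I_n | `[< is_root y (table_row w j) >]]| =
           #|[set j : 'I_n | `[< is_root x (table_row w j) >]]|),
      (* (iii) *)
      (forall i j : 'I_n, (i <= j)%N -> lexle (table_row w i) (table_row w j))
    & (* (iv) *)
      [seq drop l.-1 (table_row w i) | i <- iota 0 n] = [seq [:: a] | a <- w]].
Proof.
have [x0 _] : exists x0 : A, True by case: w Hn => [|a ?] //; exists a.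
move=> n l; split.
- move=> i r u x; split.
  + exact: root_row.
  + exact: prim_row.
  + exact: row_pow.
- move=> i x y [p [q [Ex Ey]]]; split.
    exists (iter (size p) (stdperm w) i); rewrite Ey.
    by apply: (conj_step x0); rewrite -Ex; apply: root_row.
  apply/eqP; rewrite eqn_leq Ex Ey !card_conj //.
- by move=> i j Hij; rewrite !(table_rowE x0); apply: lex_mkseq.
- rewrite -{2}(mkseq_nth x0 w) /mkseq -map_comp.
  apply/eq_in_map => i; rewrite mem_iota add0n => /andP [_ Hi] /=.
  exact: (last_col x0 w (Ordinal Hi)).
Qed.
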